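(* Let $G$ be a graph of order $n$ with a clique partition $F$ of size $|F|=k$, and let $1\le i\le\min\{n,k\}$. Let $q_i(G)$ denote the $i$th largest eigenvalue of the signless Laplacian $Q(G)=D(G)+\mathcal A(G)$. (i) If $G$ is $t$ clique-regular with respect to $F$, then $q_i(G)-\lambda_i(G)\ge t$. (ii) If $G$ is $s$ clique-uniform with respect to $F$, then $q_i(G)-\lambda_i(P_G)\ge s$.
   Context: All graphs are finite and simple; $\mathcal A(G)$ is the adjacency matrix, $D(G)$ the diagonal matrix of vertex degrees, and $\lambda_i(\cdot)$ denotes the $i$th largest adjacency eigenvalue. A clique partition of $G$ is a set $F=\{C_1,\dots,C_k\}$ of cliques such that every edge lies in exactly one $C_j$. The clique-degree of a vertex is the number of cliques of $F$ containing it; $G$ is $t$ clique-regular if every clique-degree equals $t$, and $s$ clique-uniform if $|C_j|=s$ for all $j$. The clique partition graph $P_G$ has vertex set $\{1,\dots,k\}$ with $i\neq j$ adjacent iff $C_i\cap C_j\neq\emptyset$. *)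

(* Defs.v *)
From HB Require Import structures.
From mathcomp Require Import all_boot all_order all_algebra.
From mathcomp Require Import reals.
Set Implicit Arguments. Unset Strict Implicit. Unset Printing Implicit Defensive.
Import Order.TTheory GRing.Theory Num.Theory.
Local Open Scope ring_scope.

Definition simple_graph n (e : rel 'I_n) : Prop :=
  (forall u v, e u v = e v u) /\ (forall u, ~~ e u u).

Definition adjmx (R : realType) n (e : rel 'I_n) : 'M[R]_n :=
  \matrix_(u, v) (e u v)%:R.

Definition degmx (R : realType) n (e : rel 'I_n) : 'M[R]_n :=
  \matrix_(u, v) ((u == v)%:R * (#|[set w | e u w]|)%:R).

Definition signless_lap (R : realType) n (e : rel 'I_n) : 'M[R]_n :=
  degmx R e + adjmx R e.

(* s is the list of eigenvalues of A (roots of the characteristic polynomial,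
   with multiplicity) in nonincreasing order; s`_(i-1) is the i-th largest. *)
Definition is_spectrum (R : realType) n (A : 'M[R]_n) (s : seq R) : Prop :=
  sorted (fun x y => y <= x) s /\ char_poly A = \prod_(x <- s) ('X - x%:P).

Definition is_clique n (e : rel 'I_n) (C : {set 'I_n}) : Prop :=
  forall u v, u \in C -> v \in C -> u != v -> e u v.

(* F = {C_1,...,C_k} is a clique partition: cliques (each covering an edge,
   i.e. of size >= 2) such that every edge lies in exactly one C_j. *)
Definition clique_partition n k (e : rel 'I_n) (C : 'I_k -> {set 'I_n}) : Prop :=
  (forall j, 2 <= #|C j|)%N /\
  (forall j, is_clique e (C j)) /\
  (forall u v, e u v -> exists! j, u \in C j /\ v \in C j).

Definition clique_degree n k (C : 'I_k -> {set 'I_n}) (v : 'I_n) : nat :=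
  #|[set j | v \in C j]|.

Definition clique_regular n k (C : 'I_k -> {set 'I_n}) (t : nat) : Prop :=
  forall v, clique_degree C v = t.

Definition clique_uniform n k (C : 'I_k -> {set 'I_n}) (s : nat) : Prop :=
  forall j, #|C j| = s.

Definition cp_graph n k (C : 'I_k -> {set 'I_n}) : rel 'I_k :=
  fun i j => (i != j) && (C i :&: C j != set0).

(* Main.v *)
Require Import Defs.
From mathcomp Require Import all_boot all_order all_algebra.
From mathcomp Require Import reals.
From mathcomp Require Import perm ring lra.
Set Implicit Arguments. Unset Strict Implicit. Unset Printing Implicit Defensive.
Import Order.TTheory GRing.Theory Num.Theory.
Local Open Scope ring_scope.

Section Lin.
Variable R : rcfType.

Definition nrm n (x : 'rV[R]_n) : R := (x *m x^T) 0 0.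
Definition qf n (M : 'M[R]_n) (x : 'rV[R]_n) : R := (x *m M *m x^T) 0 0.

Lemma nrmE n (x : 'rV[R]_n) : nrm x = \sum_j x 0 j ^+ 2.
Proof. by rewrite /nrm mxE; apply: eq_bigr => j _; rewrite mxE expr2. Qed.

Lemma nrm_ge0 n (x : 'rV[R]_n) : 0 <= nrm x.
Proof. by rewrite nrmE; apply: sumr_ge0 => j _; apply: sqr_ge0. Qed.

Lemma nrm_eq0 n (x : 'rV[R]_n) : nrm x = 0 -> x = 0.
Proof.
rewrite nrmE => /eqP; rewrite psumr_eq0; last by move=> j _; apply: sqr_ge0.
move=> /allP H; apply/rowP => j; rewrite mxE.
by have := H j (mem_index_enum j); rewrite sqrf_eq0 => /eqP.
Qed.

Lemma nrm_gt0 n (x : 'rV[R]_n) : x != 0 -> 0 < nrm x.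
Proof.
move=> nz; rewrite lt_def nrm_ge0 andbT; apply/eqP => /nrm_eq0 H.
by rewrite H eqxx in nz.
Qed.

Lemma sym_sq0 n (S : 'M[R]_n) : S^T = S -> S *m S = 0 -> S = 0.
Proof.
move=> sS SS; apply/row_matrixP => i; rewrite row0.
apply: nrm_eq0; rewrite nrmE.
transitivity ((S *m S) i i); last by rewrite SS mxE.
rewrite mxE; apply: eq_bigr => j _.
by rewrite !mxE expr2 -{2}sS mxE.
Qed.

Lemma sym_nil0 n (S : 'M[R]_n) m : S^T = S -> S ^+ m.+1 = 0 -> S = 0.
Proof.
move=> sS; elim: m => [|m IH]; first by rewrite expr1.
move=> H; apply: IH.
have sT : (S ^+ m.+1)^T = S ^+ m.+1.
  elim: (m.+1) => [|p IHp]; first by rewrite !expr0 trmx1.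
  by rewrite exprS -mulmxE trmx_mul IHp sS mulmxE -exprSr exprS.
apply: sym_sq0 => //; rewrite mulmxE -exprD.
have -> : (m.+1 + m.+1 = m.+2 + m)%N by rewrite addSn addnS.
by rewrite exprD H mul0r.
Qed.

Lemma char_poly_sim n (P D : 'M[R]_n) : P \in unitmx ->
  char_poly (invmx P *m D *m P) = char_poly D.
Proof.
move=> uP; rewrite /char_poly /char_poly_mx.
set f := map_mx (@polyC R).
have fM : forall A B : 'M[R]_n, f (A *m B) = f A *m f B by move=> A B; rewrite /f map_mxM.
have H1 : f (invmx P) *m f P = 1%:M by rewrite -fM mulVmx // /f map_mx1.
have HX : 'X%:M = f (invmx P) *m 'X%:M *m f P :> 'M_n.
  by rewrite -scalemx1 -scalemxAr mulmx1 -scalemxAl H1.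
rewrite {1}HX !fM -mulmxBl -mulmxBr !det_mulmx mulrAC -det_mulmx.
by rewrite H1 det1 mul1r.
Qed.

Lemma horner_sym n (M : 'M[R]_n.+1) p : M^T = M -> (horner_mx M p)^T = horner_mx M p.
Proof.
move=> sM; elim/poly_ind: p => [|p c IH]; first by rewrite rmorph0 trmx0.
rewrite rmorphD rmorphM /= horner_mx_X horner_mx_C linearD /= tr_scalar_mx.
rewrite -mulmxE trmx_mul IH sM; congr (_ + _).
by have := comm_mx_horner p (comm_mx_refl M); rewrite /comm_mx.
Qed.


Lemma sym_eig n (M : 'M[R]_n) (s : seq R) : M^T = M ->
  char_poly M = \prod_(x <- s) ('X - x%:P) ->
  exists2 P : 'M[R]_n, P \in unitmx &
    forall j : 'I_n, row j P *m M = s`_j *: row j P.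
Proof.
case: n M => [|n] M sM chM.
  by exists 1%:M; [exact: unitmx1 | case].
have sz : size s = n.+1.
  by have := size_char_poly M; rewrite chM size_prod_XsubC => -[].
set p := \prod_(x <- undup s) ('X - x%:P).
have hp : horner_mx M p = 0.
  apply: (@sym_nil0 _ _ n (horner_sym p sM)).
  rewrite -rmorphXn /=.
  have -> : p ^+ n.+1 = char_poly M *
      \prod_(x <- undup s) ('X - x%:P) ^+ (n.+1 - count_mem x s).
    rewrite /p -prodrXl chM -(big_undup_iterop_count _ s xpredT) -big_split /=.
    apply: eq_bigr => x _; rewrite Monoid.iteropE iter_mulr_1 -exprD subnKC //.
    by rewrite -sz count_size.
  by rewrite rmorphM /= Cayley_Hamilton mul0r.
have [P0 uP0 dP0] : exists2 P, P \in unitmx & diagonalizable_for P M.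
  apply/mxpoly.diagonalizableP; exists (undup s); first exact: undup_uniq.
  exact: mxminpoly_min.
have [d Md] := mxpoly.diagonalizable_forLR uP0 dP0.
rewrite mxpoly.conjVmx // in Md.
have PM : P0 *m M = diag_mx d *m P0 by rewrite Md !mulmxA mulmxV // mul1mx.
have ch2 : \prod_(x <- s) ('X - x%:P) = \prod_(j < n.+1) ('X - (d 0 j)%:P).
  rewrite -chM Md char_poly_sim // char_poly_trig ?diag_mx_is_trig //.
  by apply: eq_bigr => j _; rewrite mxE eqxx mulr1n.
have pe : perm_eq s [tuple d 0 j | j < n.+1].
  apply/allP => x _; apply/eqP; rewrite -!mu_prod_XsubC ch2.
  by rewrite big_map val_ord_tuple big_enum.
have [sg Hs] := tuple_permP pe.
exists (row_perm sg P0).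
  by rewrite row_permE unitmx_mul unitmx_perm.
move=> j.
have -> : row j (row_perm sg P0) = row (sg j) P0.
  by apply/rowP => k; rewrite !mxE.
have -> : s`_j = d 0 (sg j) by rewrite Hs nth_mktuple tnth_mktuple.
rewrite -row_mul PM.
by apply/rowP => k; rewrite !mxE (bigD1 (sg j)) //= big1 ?addr0 => [|l /negPf nl];
  rewrite !mxE ?eqxx ?mulr1n // eq_sym nl mulr0n mul0r.
Qed.

Lemma psd_sum n m (u : 'I_n -> 'rV[R]_m) (key c : 'I_n -> R) :
  (forall j l, key j != key l -> u j *m (u l)^T = 0) ->
  (forall j l, key j = key l -> c j = c l) ->
  (forall j, u j = 0 \/ 0 <= c j) ->
  0 <= ((\sum_j c j *: u j) *m (\sum_l u l)^T) 0 0.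
Proof.
move=> orth ck sup.
pose r j := Num.sqrt (c j).
have E : (\sum_j c j *: u j) *m (\sum_l u l)^T =
         (\sum_j r j *: u j) *m (\sum_l r l *: u l)^T.
  have trS (F : 'I_n -> 'rV[R]_m) : (\sum_l F l)^T = \sum_l (F l)^T.
    exact: raddf_sum.
  rewrite !trS !mulmx_suml; apply: eq_bigr => j _.
  rewrite !mulmx_sumr; apply: eq_bigr => l _.
  rewrite linearZ /= -!scalemxAl -scalemxAr scalerA.
  have [kjl|kjl] := eqVneq (key j) (key l); last by rewrite orth // !scaler0.
  case: (sup j) => [->|cj]; first by rewrite mul0mx !scaler0.
  case: (sup l) => [->|cl]; first by rewrite trmx0 mulmx0 !scaler0.
  by rewrite /r (ck _ _ kjl) -expr2 sqr_sqrtr // -(ck _ _ kjl).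
rewrite E; exact: nrm_ge0.
Qed.

Lemma eig_quad n (M : 'M[R]_n) (s : seq R) (P : 'M_n) (b : 'rV_n) (c : R -> R) :
  M^T = M -> (forall j, row j P *m M = s`_j *: row j P) ->
  (forall j : 'I_n, b 0 j = 0 \/ 0 <= c s`_j) ->
  0 <= ((\sum_(j < n) c s`_j *: (b 0 j *: row j P)) *m (b *m P)^T) 0 0.
Proof.
move=> sM eig sup.
rewrite [b *m P]mulmx_sum_row.
apply: (@psd_sum n n (fun j => b 0 j *: row j P) (fun j : 'I_n => s`_j) (fun j => c s`_j)).
- move=> j l njl; rewrite linearZ /= -scalemxAl -scalemxAr.
  suff -> : row j P *m (row l P)^T = 0 by rewrite !scaler0.
  have H : (row j P *m M) *m (row l P)^T = row j P *m (row l P *m M)^T.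
    by rewrite trmx_mul sM mulmxA.
  rewrite !eig linearZ /= -scalemxAl -scalemxAr in H.
  move/eqP: H; rewrite -subr_eq0 -scalerBl scaler_eq0 subr_eq0 (negPf njl) /=.
  by move/eqP.
- by move=> j l ->.
- move=> j; case: (sup j) => [->|]; [left; exact: scale0r | by right].
Qed.

Lemma xM_sum n (M : 'M[R]_n) (s : seq R) (P : 'M_n) (b : 'rV_n) :
  (forall j, row j P *m M = s`_j *: row j P) ->
  b *m P *m M = \sum_(j < n) s`_j *: (b 0 j *: row j P).
Proof.
move=> eig; rewrite [b *m P]mulmx_sum_row mulmx_suml; apply: eq_bigr => j _.
by rewrite -scalemxAl eig !scalerA mulrC.
Qed.

Lemma subE1 (A B : 'M[R]_1) (l : R) : (A - l *: B) 0 0 = A 0 0 - l * B 0 0.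
Proof. by rewrite !mxE. Qed.
Lemma subE2 (A B : 'M[R]_1) (l : R) : (l *: B - A) 0 0 = l * B 0 0 - A 0 0.
Proof. by rewrite !mxE. Qed.

Lemma subE0 n0 (A B : 'M[R]_(1,n0)) j : (A - B) 0 j = A 0 j - B 0 j.
Proof. by rewrite !mxE. Qed.

Lemma eig_ge n (M : 'M[R]_n) (s : seq R) (P : 'M_n) (b : 'rV_n) (lam : R) :
  M^T = M -> (forall j, row j P *m M = s`_j *: row j P) ->
  (forall j : 'I_n, b 0 j = 0 \/ lam <= s`_j) ->
  lam * nrm (b *m P) <= qf M (b *m P).
Proof.
move=> sM eig sup; rewrite -subr_ge0.
have := @eig_quad n M s P b (fun y => y - lam) sM eig.
have -> : \sum_(j < n) (s`_j - lam) *: (b 0 j *: row j P) = b *m P *m M - lam *: (b *m P).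
  rewrite (xM_sum _ eig) [b *m P]mulmx_sum_row scaler_sumr -sumrB; apply: eq_bigr => j _.
  by rewrite scalerBl.
rewrite mulmxBl -scalemxAl subE1 /qf /nrm => H; apply: H.
by move=> j; case: (sup j) => H; [left | right; rewrite subr_ge0].
Qed.

Lemma eig_le n (M : 'M[R]_n) (s : seq R) (P : 'M_n) (b : 'rV_n) (lam : R) :
  M^T = M -> (forall j, row j P *m M = s`_j *: row j P) ->
  (forall j : 'I_n, b 0 j = 0 \/ s`_j <= lam) ->
  qf M (b *m P) <= lam * nrm (b *m P).
Proof.
move=> sM eig sup; rewrite -subr_ge0.
have := @eig_quad n M s P b (fun y => lam - y) sM eig.
have -> : \sum_(j < n) (lam - s`_j) *: (b 0 j *: row j P) = lam *: (b *m P) - b *m P *m M.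
  rewrite (xM_sum _ eig) [b *m P]mulmx_sum_row scaler_sumr -sumrB; apply: eq_bigr => j _.
  by rewrite scalerBl.
rewrite mulmxBl -scalemxAl subE2 /qf /nrm => H; apply: H.
by move=> j; case: (sup j) => H; [left | right; rewrite subr_ge0].
Qed.

Lemma pid_entry n r (a : 'rV[R]_n) (j : 'I_n) :
  (a *m pid_mx r) 0 j = if (j < r)%N then a 0 j else 0.
Proof.
rewrite mxE (bigD1 j) //= big1 => [|k nkj]; last first.
  by rewrite mxE (_ : (k == j :> nat) = false) ?mulr0 //; apply/negbTE.
by rewrite mxE eqxx /=; case: (j < r)%N; rewrite ?mulr1 ?mulr0 addr0.
Qed.

Lemma sorted_ge (s : seq R) j l : sorted (fun x y => y <= x) s ->
  (j <= l)%N -> (l < size s)%N -> s`_l <= s`_j.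
Proof.
move=> ss jl ls.
have tr : transitive (fun x y : R => y <= x).
  by move=> y x z hxy hyz; apply: le_trans hyz hxy.
have rf : reflexive (fun x y : R => y <= x) by move=> x; exact: lexx.
apply: (sorted_leq_nth tr rf 0 ss) => //; rewrite inE //.
exact: leq_ltn_trans jl ls.
Qed.

Lemma size_spec n (M : 'M[R]_n) (s : seq R) :
  char_poly M = \prod_(x <- s) ('X - x%:P) -> size s = n.
Proof. by move=> chM; have := size_char_poly M; rewrite chM size_prod_XsubC => -[]. Qed.

Lemma spec_ge n (M : 'M[R]_n) (s : seq R) (i0 : nat) : M^T = M ->
  sorted (fun x y => y <= x) s -> char_poly M = \prod_(x <- s) ('X - x%:P) ->
  (i0 < n)%N ->
  exists2 W : 'M[R]_n, \rank W = i0.+1 &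
    forall x, (x <= W)%MS -> s`_i0 * nrm x <= qf M x.
Proof.
move=> sM ss chM lt; have sz := size_spec chM.
have [P uP eig] := sym_eig sM chM.
exists (pid_mx i0.+1 *m P).
  by rewrite mxrankMfree ?row_free_unit // rank_pid_mx.
move=> x /submxP [a ->]; rewrite mulmxA; apply: eig_ge => // j.
rewrite pid_entry; case: ltnP => H; last by left.
by right; apply: sorted_ge => //; rewrite sz.
Qed.

Lemma spec_le n (M : 'M[R]_n) (s : seq R) (i0 : nat) : M^T = M ->
  sorted (fun x y => y <= x) s -> char_poly M = \prod_(x <- s) ('X - x%:P) ->
  (i0 < n)%N ->
  exists2 W : 'M[R]_n, \rank W = (n - i0)%N &
    forall x, (x <= W)%MS -> qf M x <= s`_i0 * nrm x.
Proof.
move=> sM ss chM lt; have sz := size_spec chM.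
have [P uP eig] := sym_eig sM chM.
exists (copid_mx i0 *m P).
  by rewrite mxrankMfree ?row_free_unit // rank_copid_mx // ltnW.
move=> x /submxP [a ->]; rewrite mulmxA; apply: eig_le => // j.
rewrite /copid_mx mulmxBr mulmx1 subE0 pid_entry; case: ltnP => H.
  by left; rewrite subrr.
by right; apply: sorted_ge => //; rewrite sz.
Qed.

Lemma cap_nz m1 m2 n (U : 'M[R]_(m1, n)) (V : 'M[R]_(m2, n)) :
  (n < \rank U + \rank V)%N ->
  exists2 x : 'rV[R]_n, x != 0 & (x <= U)%MS && (x <= V)%MS.
Proof.
move=> H; rewrite -mxrank_sum_cap in H.
have H2 : (0 < \rank (U :&: V))%N.
  by rewrite lt0n; apply/eqP => H0; move: H; rewrite H0 addn0 ltnNge rank_leq_col.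
have : (U :&: V)%MS != 0 by rewrite -mxrank_eq0 -lt0n.
case/rowV0Pn => x xs nx; exists x => //; by rewrite -sub_capmx.
Qed.


Lemma weyl n (A Q : 'M[R]_n) (sA sQ : seq R) (i0 : nat) (c : R) :
  A^T = A -> Q^T = Q ->
  sorted (fun x y => y <= x) sA -> char_poly A = \prod_(x <- sA) ('X - x%:P) ->
  sorted (fun x y => y <= x) sQ -> char_poly Q = \prod_(x <- sQ) ('X - x%:P) ->
  (i0 < n)%N -> (forall x, qf A x + c * nrm x <= qf Q x) ->
  sA`_i0 + c <= sQ`_i0.
Proof.
move=> sAs sQs ssA chA ssQ chQ lt H.
have [W1 r1 h1] := spec_ge sAs ssA chA lt.
have [W2 r2 h2] := spec_le sQs ssQ chQ lt.
have [x nx /andP[x1 x2]] : exists2 x : 'rV[R]_n, x != 0 & (x <= W1)%MS && (x <= W2)%MS.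
  by apply: cap_nz; rewrite r1 r2 addSn subnKC // ltnW.
have := h1 _ x1; have := h2 _ x2; have := H x; have := nrm_gt0 nx.
set N := nrm x; set a := sA`_i0; set b := sQ`_i0 => Np h3 h4 h5.
rewrite -subr_ge0 -(pmulr_lge0 _ Np); nra.
Qed.

Lemma nrm_sub m (u v : 'rV[R]_m) (t : R) :
  nrm (u - t *: v) = nrm u - 2 * t * (u *m v^T) 0 0 + t ^+ 2 * nrm v.
Proof.
rewrite !nrmE mxE.
transitivity (\sum_j (u 0 j ^+ 2 - 2 * t * (u 0 j * v^T j 0) + t ^+ 2 * v 0 j ^+ 2)).
  by apply: eq_bigr => j _; rewrite !mxE; ring.
by rewrite big_split sumrB /= !mulr_sumr.
Qed.


Lemma interl n k (N : 'M[R]_(n, k)) (Q : 'M[R]_n) (B : 'M[R]_k)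
    (sQ sB : seq R) (i0 : nat) (c : R) :
  Q^T = Q -> B^T = B ->
  sorted (fun x y => y <= x) sQ -> char_poly Q = \prod_(x <- sQ) ('X - x%:P) ->
  sorted (fun x y => y <= x) sB -> char_poly B = \prod_(x <- sB) ('X - x%:P) ->
  (i0 < n)%N -> (i0 < k)%N ->
  N^T *m N = B + c%:M -> (forall y, nrm (y *m N) <= qf Q y) ->
  sB`_i0 + c <= sQ`_i0.
Proof.
move=> sQs sBs ssQ chQ ssB chB ltn ltk NN H.
have [W1 r1 h1] := spec_ge sBs ssB chB ltk.
have [W2 r2 h2] := spec_le sQs ssQ chQ ltn.
set a := sQ`_i0; set b := sB`_i0.
set M1 := N^T *m N.
have sM1 : M1^T = M1 by rewrite /M1 trmx_mul trmxK.
have qM1 : forall x, qf M1 x = nrm (x *m N^T).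
  by move=> x; rewrite /qf /nrm trmx_mul trmxK !mulmxA.
have qM1B : forall x, qf M1 x = qf B x + c * nrm x.
  move=> x; rewrite /qf /M1 NN mulmxDr mulmxDl mxE; congr (_ + _).
  by rewrite mul_mx_scalar -scalemxAl mxE.
have [cle|cgt] := leP (b + c) (0 : R).
  have : (W2 != 0) by rewrite -mxrank_eq0 r2 subn_eq0 -ltnNge.
  case/rowV0Pn => y y2 ny.
  have := h2 _ y2; have := H y; have := nrm_ge0 (y *m N); have := nrm_gt0 ny.
  move=> p1 p2 p3 p4.
  have : 0 <= a * nrm y by apply: le_trans p2 _; apply: le_trans p3 p4.
  rewrite pmulr_lge0 // => a0; exact: le_trans cle a0.
set c' := b + c.
have capz : (W1 :&: kermx N^T)%MS = 0.
  apply/eqP; apply: contraT => /rowV0Pn [x].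
  rewrite sub_capmx => /andP [x1 /sub_kermxP xk] nx.
  have := h1 _ x1; have := qM1B x; rewrite qM1 xk.
  have : nrm (0 : 'rV[R]_n) = 0 by rewrite /nrm mul0mx mxE.
  move=> ->; have := nrm_gt0 nx; move=> p1 p2 p3.
  have h4 : (sB`_i0 + c) * nrm x <= 0.
    by rewrite mulrDl; apply: le_trans (lerD p3 (lexx (c * nrm x))) _; rewrite -p2.
  by move: (mulr_gt0 cgt p1); rewrite ltNge h4.
have r3 : \rank (W1 *m N^T) = i0.+1.
  by have := mxrank_mul_ker W1 N^T; rewrite capz mxrank0 addn0 r1.
have [y ny /andP[y3 y2]] : exists2 y : 'rV[R]_n, y != 0 &
     (y <= W1 *m N^T)%MS && (y <= W2)%MS.
  by apply: cap_nz; rewrite r3 r2 addSn subnKC // ltnW.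
case/submxP: y3 => z yE.
set x := z *m W1.
have x1 : (x <= W1)%MS by apply: submxMl.
have yx : y = x *m N^T by rewrite yE mulmxA.
have hq : nrm y = qf M1 x by rewrite qM1 yx.
have hyN : y *m N = x *m M1 by rewrite yx /M1 mulmxA.
have hxx : (x *m M1 *m x^T) 0 0 = qf M1 x by [].
have e1 := h1 _ x1.
have e2 := qM1B x.
have e3 := h2 _ y2.
have e4 := H y.
have e5 := nrm_ge0 (x *m M1 - c' *: x).
rewrite nrm_sub hxx -hyN in e5.
have qp := nrm_gt0 ny.
have nx0 := nrm_ge0 x.
rewrite hq in qp e3.
set q := qf M1 x in qp e3 e2 e5 hq.
set Nx := nrm x in e1 e2 e5 nx0.
set Y := nrm (y *m N) in e4 e5.
have L1 : c' * Nx <= q by rewrite e2 /c' mulrDl lerD2r.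
have L2 : c' * (c' * Nx) <= c' * q := ler_wpM2l (ltW cgt) L1.
rewrite -subr_ge0 -(pmulr_lge0 _ qp).
move: L2 e3 e4 e5 qp; rewrite /a /c' /q /Nx /Y expr2.
generalize (sQ`_i0) (sB`_i0 + c) (qf M1 x) (nrm x) (nrm (y *m N)) (qf Q y).
move=> A0 C0 Q0 N0 Y0 G0 h1' h2' h3' h4' h5'; nra.
Qed.
End Lin.

Section Graph.
Variables (R : realType) (n k : nat) (e : rel 'I_n) (C : 'I_k -> {set 'I_n}).

Definition incm : 'M[R]_(n, k) := \matrix_(u, j) (u \in C j)%:R.

Lemma sum_bool_card (T : finType) (b : pred T) :
  \sum_(j : T) ((b j)%:R : R) = (#|b|)%:R.
Proof.
rewrite -sum1_card natr_sum [RHS]big_mkcond /=; apply: eq_bigr => j _.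
by rewrite unfold_in; case: (b j).
Qed.

Lemma NNt_entry u v : (incm *m incm^T) u v =
  (#|[pred j | (u \in C j) && (v \in C j)]|)%:R.
Proof.
rewrite mxE -sum_bool_card; apply: eq_bigr => j _.
by rewrite !mxE -natrM mulnb.
Qed.

Lemma sum_set_card (T : finType) (A : {set T}) :
  \sum_(j : T) ((j \in A)%:R : R) = (#|A|)%:R.
Proof.
rewrite -sum1_card natr_sum [RHS]big_mkcond /=; apply: eq_bigr => j _.
by case: (j \in A).
Qed.

Lemma NtN_entry j l : (incm^T *m incm) j l = (#|C j :&: C l|)%:R.
Proof.
rewrite mxE -sum_set_card; apply: eq_bigr => u _.
by rewrite !mxE -natrM mulnb in_setI.
Qed.

Lemma cliq_pair u v : clique_partition e C -> u != v ->
  #|[pred j | (u \in C j) && (v \in C j)]| = e u v.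
Proof.
move=> [c2 [cq cu]] nuv.
case euv: (e u v).
  have [j [[uj vj] uniq]] := cu u v euv.
  rewrite (@eq_card _ _ (pred1 j)) ?card1 // => x; rewrite !inE.
  apply/andP/eqP => [[ux vx]|->] //; by rewrite (uniq x).
rewrite eq_card0 // => x; rewrite !inE; apply/negbTE/negP => /andP[ux vx].
by move: (cq x u v ux vx nuv); rewrite euv.
Qed.

Lemma inter_le1 j l : clique_partition e C -> j != l -> (#|C j :&: C l| <= 1)%N.
Proof.
move=> [c2 [cq cu]] njl; rewrite leqNgt; apply/negP => /card_gt1P [u [v [uI vI nuv]]].
move: uI vI; rewrite !inE => /andP[uj ul] /andP[vj vl].
have [j0 [_ uniq]] := cu u v (cq j u v uj vj nuv).
by move: njl; rewrite -(uniq j) // -(uniq l) // eqxx.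
Qed.

Lemma cd_le_deg u : clique_partition e C ->
  (clique_degree C u <= #|[set w | e u w]|)%N.
Proof.
move=> [c2 [cq cu]]; rewrite /clique_degree.
pose f j := odflt u [pick w in C j :\ u].
have fP j : u \in C j -> (f j \in C j) && (f j != u).
  move=> uj; rewrite /f; case: pickP => [w|] /=.
    by rewrite !inE => /andP[-> ->].
  move=> H; have := c2 j; rewrite (cardsD1 u) uj.
  by rewrite (eq_card0 H).
rewrite -(@card_in_imset _ _ f); last first.
  move=> j l; rewrite !inE => uj ul fjl.
  have /andP[fj nfj] := fP j uj; have /andP[fl _] := fP l ul.
  have nuf : u != f j by rewrite eq_sym.
  have [j0 [_ uniq]] := cu u (f j) (cq j u (f j) uj fj nuf).
  by rewrite -(uniq j) // -(uniq l) // fjl.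
apply: subset_leq_card; apply/subsetP => w /imsetP [j]; rewrite inE => uj ->.
have /andP[fj nfj] := fP j uj.
by rewrite inE; apply: (cq j) => //; rewrite eq_sym.
Qed.



Lemma NNt_eq : clique_partition e C -> simple_graph e ->
  incm *m incm^T =
  \matrix_(u, v) ((u == v)%:R * (clique_degree C u)%:R) + adjmx R e.
Proof.
move=> cp [esym eirr]; apply/matrixP => u v.
rewrite NNt_entry !mxE; case: eqVneq => [<-|nuv].
  rewrite (negPf (eirr u)) mul1r addr0 /clique_degree cardsE.
  by congr (_%:R); apply: eq_card => j; rewrite !inE andbb.
by rewrite mul0r add0r cliq_pair.
Qed.

Lemma NtN_eq s : clique_partition e C -> clique_uniform C s ->
  incm^T *m incm = adjmx R (cp_graph C) + (s%:R)%:M.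
Proof.
move=> cp cuni; apply/matrixP => j l.
rewrite NtN_entry !mxE /cp_graph; case: eqVneq => [<-|njl] /=.
  by rewrite setIid cuni add0r mulr1n.
rewrite mulr0n addr0; congr (_%:R).
have := inter_le1 cp njl; rewrite -card_gt0.
by case: (#|_|) => [|[|]].
Qed.

Lemma qf_add m (M1 M2 : 'M[R]_m) x : qf (M1 + M2) x = qf M1 x + qf M2 x.
Proof. by rewrite /qf mulmxDr mulmxDl mxE. Qed.

Lemma qf_diag m (f : 'I_m -> R) x :
  qf (\matrix_(u, v) ((u == v)%:R * f u)) x = \sum_u f u * x 0 u ^+ 2.
Proof.
rewrite /qf mxE; apply: eq_bigr => u _.
rewrite mxE (bigD1 u) //= big1 => [|a nau]; last by rewrite !mxE (negPf nau) mul0r mulr0.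
by rewrite !mxE eqxx mul1r addr0 expr2 [_ * f u]mulrC -mulrA.
Qed.

Lemma nrm_mulN m p (N : 'M[R]_(m, p)) x : nrm (x *m N) = qf (N *m N^T) x.
Proof. by rewrite /nrm /qf trmx_mul !mulmxA. Qed.

Lemma key_ineq y : clique_partition e C -> simple_graph e ->
  nrm (y *m incm) <= qf (signless_lap R e) y.
Proof.
move=> cp sg; rewrite nrm_mulN NNt_eq // /signless_lap !qf_add /degmx !qf_diag lerD2r.
apply: ler_sum => u _; apply: ler_wpM2r; first exact: sqr_ge0.
by rewrite ler_nat cd_le_deg.
Qed.

Lemma reg_eq x t : clique_partition e C -> simple_graph e -> clique_regular C t ->
  qf (adjmx R e) x + t%:R * nrm x = nrm (x *m incm).
Proof.
move=> cp sg reg; rewrite nrm_mulN NNt_eq // qf_add qf_diag addrC nrmE mulr_sumr.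
by congr (_ + _); apply: eq_bigr => u _; rewrite reg.
Qed.

Lemma adj_sym m (r : rel 'I_m) : (forall u v, r u v = r v u) ->
  (adjmx R r)^T = adjmx R r.
Proof. by move=> rs; apply/matrixP => u v; rewrite !mxE rs. Qed.

Lemma lap_sym : simple_graph e -> (signless_lap R e)^T = signless_lap R e.
Proof.
move=> [es _]; rewrite /signless_lap linearD /= adj_sym //; congr (_ + _).
apply/matrixP => u v; rewrite !mxE; case: eqVneq => [->|nuv]; first by [].
by rewrite !mul0r.
Qed.
End Graph.

Theorem mainTheorem8 (R : realType) (n k : nat) (e : rel 'I_n)
    (C : 'I_k -> {set 'I_n}) (i : nat) :
  simple_graph e -> clique_partition e C -> (1 <= i <= minn n k)%N ->
  (forall t : nat, clique_regular C t ->
     forall sQ sA : seq R,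
       is_spectrum (signless_lap R e) sQ -> is_spectrum (adjmx R e) sA ->
       t%:R <= sQ`_i.-1 - sA`_i.-1) /\
  (forall s : nat, clique_uniform C s ->
     forall sQ sP : seq R,
       is_spectrum (signless_lap R e) sQ -> is_spectrum (adjmx R (cp_graph C)) sP ->
       s%:R <= sQ`_i.-1 - sP`_i.-1).
Proof.
move=> sg cp /andP[i1 imin].
have /andP[ilen ilek] : ((i <= n) && (i <= k))%N by rewrite -leq_min.
have i0n : (i.-1 < n)%N by rewrite prednK.
have i0k : (i.-1 < k)%N by rewrite prednK.
have sAd : (adjmx R e)^T = adjmx R e by apply: adj_sym; case: sg.
split.
  move=> t reg sQ sA [ssQ chQ] [ssA chA].
  have := weyl sAd (lap_sym R sg) ssA chA ssQ chQ i0n (c := t%:R) _.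
  move=> /(_ _) h; have {}h : sA`_i.-1 + t%:R <= sQ`_i.-1.
    by apply: h => x; rewrite (reg_eq x cp sg reg); exact: key_ineq.
  by rewrite lerBrDl.
move=> s cuni sQ sP [ssQ chQ] [ssP chP].
have sB : (adjmx R (cp_graph C))^T = adjmx R (cp_graph C).
  by apply: adj_sym => j l; rewrite /cp_graph eq_sym setIC.
have := @interl R n k (@incm R n k C) _ _ sQ sP i.-1 s%:R (lap_sym R sg) sB ssQ chQ ssP chP i0n i0k
  (NtN_eq R cp cuni) (fun y => key_ineq y cp sg).
by move=> h; rewrite lerBrDl.
Qed.
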